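(* Let $u\in\widehat{\mathfrak{kv}}_2$, and let $f=\sum_{m\ge2}f_mx^m\in x^2k[[x]]$ be the unique series with $\mathrm{div}(u)=\mathrm{Tr}(f(x)-f(x+y)+f(y))$. Then $f$ is odd, and for each odd $m=3,5,\dots$ the map $u\mapsto f_m$ is a character of $\widehat{\mathfrak{kv}}_2$ (a linear map vanishing on $[\widehat{\mathfrak{kv}}_2,\widehat{\mathfrak{kv}}_2]$).
   Context: $k$ is a field of characteristic zero; $\mathfrak{lie}_2$, $\mathrm{Ass}_2$ are the degree completions of the free Lie and free associative algebras over $k$ on $x,y$. Each $a\in\mathrm{Ass}_2$ decomposes uniquely as $a=a_0+(\partial_xa)x+(\partial_ya)y$. $\mathfrak{tr}_n=\mathrm{Ass}_n^+/\langle ab-ba\rangle$ with projection $\mathrm{Tr}$; for $f=\sum f_mx^m$ without constant term, $\mathrm{Tr}(f(x))=\sum f_m\mathrm{Tr}(x^m)$ and similarly with $x$ replaced by $y$ or $x+y$. $\mathfrak{sder}_2$ is the Lie algebra of derivations $u$ of $\mathfrak{lie}_2$ with $u(x)=[x,a]$, $u(y)=[y,b]$ for some $a,b\in\mathfrak{lie}_2$ and $u(x+y)=0$; write $u=(a,b)$ normalized so that $a$ has no term $\lambda x$ and $b$ no term $\lambda y$. $\mathrm{div}(u)=\mathrm{Tr}(x\,\partial_xa+y\,\partial_yb)$. The differential $\delta:\mathfrak{tr}_2\to\mathfrak{tr}_3$ is $(\delta g)(x,y,z)=g(y,z)-g(x+y,z)+g(x,y+z)-g(x,y)$. $\widehat{\mathfrak{kv}}_2=\{u\in\mathfrak{sder}_2:\delta(\mathrm{div}(u))=0\}$,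 a Lie subalgebra; for $u$ in it there is a unique $f\in x^2k[[x]]$ as in the claim. *)

(* Defs.v *)
From HB Require Import structures.
From mathcomp Require Import all_boot all_order all_algebra.
Set Implicit Arguments. Unset Strict Implicit. Unset Printing Implicit Defensive.
Import Order.TTheory GRing.Theory Num.Theory.
Local Open Scope ring_scope.

Section Series.
Variable k : fieldType.

(* Degree completion of the free associative algebra Ass_n on letters 'I_n:
   a formal series is its coefficient function on words. *)
Definition ser (n : nat) := seq 'I_n -> k.

Variable n : nat.
Implicit Types (a b p q : ser n).

Definition szero : ser n := fun _ => 0.
Definition sone : ser n := fun w => (w == [::])%:R.
Definition sadd a b : ser n := fun w => a w + b w.
Definition sopp a : ser n := fun w => - a w.
Definition ssub a b : ser n := sadd a (sopp b).
Definition sscale (c : k) a : ser n := fun w => c * a w.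
Definition smul a b : ser n :=
  fun w => \sum_(i < (size w).+1) a (take i w) * b (drop i w).
Definition sbr a b : ser n := ssub (smul a b) (smul b a).
Definition spow a (j : nat) : ser n := iter j (smul a) sone.
Definition sprod (s : seq (ser n)) : ser n := foldr smul sone s.
Definition letter (i : 'I_n) : ser n := fun w => (w == [:: i])%:R.
Definition word (t : seq 'I_n) : ser n := fun w => (w == t)%:R.
Definition homog (d : nat) a : ser n := fun w => if size w == d then a w else 0.
Definition is_poly a : Prop := exists N, forall w, (N <= size w)%N -> a w = 0.

Inductive lie_poly : ser n -> Prop :=
| LP_zero : lie_poly szero
| LP_letter i : lie_poly (letter i)
| LP_add a b : lie_poly a -> lie_poly b -> lie_poly (sadd a b)
| LP_scale c a : lie_poly a -> lie_poly (sscale c a)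
| LP_br a b : lie_poly a -> lie_poly b -> lie_poly (sbr a b)
| LP_ext a b : (forall w, a w = b w) -> lie_poly a -> lie_poly b.

(* the degree completion of the free Lie algebra, inside Ass_n *)
Definition is_lie a : Prop := forall d, lie_poly (homog d a).

Inductive comm_span : ser n -> Prop :=
| CS_zero : comm_span szero
| CS_br p q : is_poly p -> is_poly q -> comm_span (sbr p q)
| CS_add a b : comm_span a -> comm_span b -> comm_span (sadd a b)
| CS_scale c a : comm_span a -> comm_span (sscale c a)
| CS_ext a b : (forall w, a w = b w) -> comm_span a -> comm_span b.

(* Tr a = Tr b in tr_n (degree completion of Ass_n^+/<ab-ba>),
   checked degree by degree *)
Definition tr_eq a b : Prop := forall d, comm_span (homog d (ssub a b)).

(* partial derivative: a = a_0 + sum_i (d_i a) x_i *)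
Definition dpart (i : 'I_n) a : ser n := fun w => a (rcons w i).

(* power series f(p) = sum_m f_m p^m, for p without constant term *)
Definition pser_at (f : nat -> k) (p : ser n) : ser n :=
  fun v => \sum_(j < (size v).+1) f j * spow p j v.

(* derivation of Ass_n with x_i |-> [x_i, c i], applied to a series *)
Definition der (c : 'I_n -> ser n) a : ser n :=
  fun v => \sum_(l < (size v).+1) \sum_(t : l.-tuple 'I_n)
     a t * \sum_(j < l) smul (smul (word (take j t)) (sbr (letter (tnth t j)) (c (tnth t j))))
                              (word (drop j.+1 t)) v.
End Series.

(* substitution homomorphism Ass_n -> Ass_m, x_i |-> phi i
   (phi i without constant term) *)
Definition subst (k : fieldType) (n m : nat) (phi : 'I_n -> ser k m) (a : ser k n) : ser k m :=
  fun v => \sum_(l < (size v).+1) \sum_(t : l.-tuple 'I_n)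
     a t * sprod (map phi t) v.

Definition x2 : 'I_2 := ord0.
Definition y2 : 'I_2 := inord 1.

Section Two.
Variable k : fieldType.
Definition X2 : ser k 2 := @letter k _ x2.
Definition Y2 : ser k 2 := @letter k _ y2.
Definition X3 : ser k 3 := @letter k _ (ord0 : 'I_3).
Definition Y3 : ser k 3 := @letter k _ (inord 1 : 'I_3).
Definition Z3 : ser k 3 := @letter k _ (inord 2 : 'I_3).

Definition sub2 (p q : ser k 3) : 'I_2 -> ser k 3 := fun i => if i == x2 then p else q.

Definition delta (g : ser k 2) : ser k 3 :=
  sadd (ssub (subst (sub2 Y3 Z3) g) (subst (sub2 (sadd X3 Y3) Z3) g))
       (ssub (subst (sub2 X3 (sadd Y3 Z3)) g) (subst (sub2 X3 Y3) g)).

(* an element u = (a,b) of sder_2, normalized: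
   u(x) = [x,a], u(y) = [y,b], u(x+y) = 0, a has no term lambda x,
   b has no term lambda y *)
Definition sder2 (a b : ser k 2) : Prop :=
  [/\ is_lie a, is_lie b, a [:: x2] = 0, b [:: y2] = 0 &
      forall w, sadd (sbr X2 a) (sbr Y2 b) w = 0].

(* representative of div(u) = Tr(x d_x a + y d_y b) *)
Definition div2 (a b : ser k 2) : ser k 2 :=
  sadd (smul X2 (dpart x2 a)) (smul Y2 (dpart y2 b)).

Definition kv2 (a b : ser k 2) : Prop :=
  sder2 a b /\ tr_eq (delta (div2 a b)) (@szero k 3).

Definition gen2 (a b : ser k 2) : 'I_2 -> ser k 2 := fun i => if i == x2 then a else b.

Definition in_x2kx (f : nat -> k) : Prop := f 0%N = 0 /\ f 1%N = 0.

(* representative of Tr(f(x) - f(x+y) + f(y)) *)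
Definition fcob (f : nat -> k) : ser k 2 :=
  sadd (ssub (pser_at f X2) (pser_at f (sadd X2 Y2))) (pser_at f Y2).

Definition is_f (a b : ser k 2) (f : nat -> k) : Prop :=
  in_x2kx f /\ tr_eq (div2 a b) (fcob f).
End Two.

(* Main.v *)
Require Import Defs.
From mathcomp Require Import all_boot all_order all_algebra.
From mathcomp Require Import ring zify.
Import GRing.Theory.
Local Open Scope ring_scope.

Set Implicit Arguments.
Unset Strict Implicit.


Section Basic.
Variable k : fieldType.
Variable n : nat.
Implicit Types (p q s : ser k n) (v w : seq 'I_n).

Definition l1supp s := forall w, size w != 1%N -> s w = 0.

Lemma smul_l1_cons s q e v : l1supp s -> smul s q (e :: v) = s [:: e] * q v.
Proof.
move=> Hs; rewrite /smul /= big_ord_recl /= Hs // mul0r add0r.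
rewrite big_ord_recl /= add0n take0 drop0 big1 ?addr0 // => i _.
rewrite /bump /= add0n add1n Hs ?mul0r //= size_take.
by case: ifP => //; case: (size v) i => [[]|].
Qed.

Lemma smul_l1_nil s q : l1supp s -> smul s q [::] = 0.
Proof. by move=> Hs; rewrite /smul /= big_ord_recl big_ord0 /= Hs // mul0r addr0. Qed.

Lemma smul_l1_rcons s q e v : l1supp s -> smul q s (rcons v e) = q v * s [:: e].
Proof.
move=> Hs; rewrite /smul size_rcons big_ord_recr /= take_oversize ?size_rcons // drop_oversize ?size_rcons // Hs // mulr0 addr0.
rewrite big_ord_recr /= -cats1 take_size_cat // drop_size_cat // big1 ?add0r // => i _.
by rewrite Hs ?mulr0 //= drop_cat ltn_ord size_cat size_drop /= addn1 eqSS subn_eq0 -ltnNge ltn_ord.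
Qed.

Lemma smul_l1_nil_r s q : l1supp s -> smul q s [::] = 0.
Proof. by move=> Hs; rewrite /smul /= big_ord_recl big_ord0 /= Hs // mulr0 addr0. Qed.

Lemma letter_l1 i : l1supp (@letter k n i).
Proof. by move=> w Hw; rewrite /letter; case: eqP => // E; rewrite E in Hw. Qed.

Lemma letter1 i e : @letter k n i [:: e] = (e == i)%:R.
Proof. by rewrite /letter eqseq_cons andbT. Qed.

Lemma sbr_letter_cons i p e v :
  sbr (@letter k n i) p (e :: v) = (e == i)%:R * p v - smul p (@letter k n i) (e :: v).
Proof. by rewrite /sbr /ssub /sadd /sopp smul_l1_cons ?letter1 //; apply: letter_l1. Qed.

Lemma smul_letter_r p i e v : smul p (@letter k n i) (rcons v e) = p v * (e == i)%:R.
Proof. by rewrite smul_l1_rcons ?letter1 //; apply: letter_l1. Qed.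

Lemma smul_letter_l i p e v : smul (@letter k n i) p (e :: v) = (e == i)%:R * p v.
Proof. by rewrite smul_l1_cons ?letter1 //; apply: letter_l1. Qed.

End Basic.


Section Lie.
Variable k : fieldType.
Variable n : nat.
Implicit Types (p q s : ser k n) (v w : seq 'I_n).

Lemma smul_nseq_comm p q m c : smul p q (nseq m c) = smul q p (nseq m c).
Proof.
rewrite /smul size_nseq (reindex_inj rev_ord_inj) /=.
apply: eq_bigr => i _.
have Hi : (i <= m)%N by rewrite -ltnS ltn_ord.
by rewrite !take_nseq ?drop_nseq ?subSS ?leq_subr // subKn // mulrC.
Qed.

Lemma lie_nseq p : lie_poly p -> forall m c, m != 1%N -> p (nseq m c) = 0.
Proof.
elim=> //=.
- move=> i m c Hm; rewrite /letter; case: eqP => // E.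
  by have := congr1 size E; rewrite size_nseq => E'; rewrite E' in Hm.
- by move=> a b _ Ha _ Hb m c Hm; rewrite /sadd Ha ?Hb ?addr0.
- by move=> c0 a _ Ha m c Hm; rewrite /sscale Ha ?mulr0.
- by move=> a b _ _ _ _ m c Hm; rewrite /sbr /ssub /sadd /sopp smul_nseq_comm subrr.
- by move=> a b E _ Ha m c Hm; rewrite -E Ha.
Qed.

Definition revprop p := forall w, p (rev w) = (-1) ^+ (size w).+1 * p w.

Lemma smul_rev p q : revprop p -> revprop q ->
  forall w, smul p q (rev w) = (-1) ^+ (size w) * smul q p w.
Proof.
move=> Hp Hq w; rewrite /smul size_rev mulr_sumr (reindex_inj rev_ord_inj) /=.
apply: eq_bigr => i _.
have Hi : (i <= size w)%N by rewrite -ltnS ltn_ord.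
rewrite take_rev drop_rev subKn // Hp Hq size_drop size_take.
case: ltnP => Hi2.
  rewrite mulrACA -exprD.
  have -> : ((size w - i).+1 + i.+1 = (size w).+2)%N by rewrite addSn addnS subnK.
  rewrite !exprS; ring.
have E : i = size w :> nat by apply/eqP; rewrite eqn_leq Hi Hi2.
rewrite E subnn !exprS expr0; ring.
Qed.

Lemma lie_rev p : lie_poly p -> revprop p.
Proof.
elim=> //=.
- by move=> w; rewrite /szero mulr0.
- move=> i w; rewrite /letter.
  case: (eqVneq w [:: i]) => [->|Hw].
    by have -> : rev [:: i] = [:: i] by []; rewrite eqxx /= !exprS expr0; ring.
  rewrite mulr0.
  suff -> : (rev w == [:: i]) = false by [].
  by apply/negbTE; apply: contra Hw => /eqP E; rewrite -(revK w) E.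
- by move=> a b _ Ha _ Hb w; rewrite /sadd Ha Hb mulrDr.
- by move=> c a _ Ha w; rewrite /sscale Ha mulrCA.
- move=> a b _ Ha _ Hb w; rewrite /sbr /ssub /sadd /sopp !smul_rev //.
  by rewrite exprS mulN1r mulNr -mulrN opprB mulrBr.
- by move=> a b E _ Ha w; rewrite -!E Ha.
Qed.

Lemma homog_at d p w : size w = d -> homog d p w = p w.
Proof. by move=> <-; rewrite /homog eqxx. Qed.

Lemma is_lie_nseq p m c : is_lie p -> m != 1%N -> p (nseq m c) = 0.
Proof.
move=> Hp Hm; rewrite -(@homog_at m p (nseq m c)) ?size_nseq //.
exact: lie_nseq.
Qed.

Lemma is_lie_rev p w : is_lie p -> p (rev w) = (-1) ^+ (size w).+1 * p w.
Proof.
move=> Hp; rewrite -(@homog_at (size w) p (rev w)) ?size_rev //.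
by rewrite lie_rev // homog_at.
Qed.

End Lie.


Section Trace.
Variable k : fieldType.
Variable n : nat.
Implicit Types (p q s : ser k n) (v w : seq 'I_n).

Definition Phi (m : nat) (g : seq 'I_n -> k) (s : ser k n) : k :=
  \sum_(t : m.-tuple 'I_n) g t * s t.

Lemma rot_tuple_inj m i : injective (fun t : m.-tuple 'I_n => [tuple of rot i t]).
Proof. by move=> t1 t2 /(congr1 val) /= /rot_inj E; apply: val_inj. Qed.

Lemma Phi_smul_comm m g p q : (forall i w, g (rot i w) = g w) ->
  Phi m g (smul p q) = Phi m g (smul q p).
Proof.
move=> Hg; rewrite /Phi.
have E : forall (p q : ser k n),
  \sum_(t : m.-tuple 'I_n) g t * smul p q t
  = \sum_(i < m.+1) \sum_(t : m.-tuple 'I_n) g t * (p (take i t) * q (drop i t)).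
  move=> p' q'; rewrite exchange_big /=; apply: eq_bigr => t _ /=.
  by rewrite /smul size_tuple mulr_sumr.
rewrite E E [RHS](reindex_inj rev_ord_inj) /=; apply: eq_bigr => i _.
rewrite [RHS](reindex_inj (@rot_tuple_inj m i)) /=; apply: eq_bigr => t _.
have Hi : (i <= m)%N by rewrite -ltnS ltn_ord.
rewrite subSS Hg /rot.
have Hs : size (drop i t) = (m - i)%N by rewrite size_drop size_tuple.
rewrite -[(m - i)%N]Hs take_size_cat // drop_size_cat //; ring.
Qed.

Lemma Phi_comm m g s : (forall i w, g (rot i w) = g w) -> comm_span s -> Phi m g s = 0.
Proof.
move=> Hg; elim => //=.
- by rewrite /Phi big1 // => t _; rewrite /szero mulr0.
- move=> p q _ _.
  have -> : Phi m g (sbr p q) = Phi m g (smul p q) - Phi m g (smul q p).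
    by rewrite /Phi -sumrB; apply: eq_bigr => t _; rewrite /sbr /ssub /sadd /sopp mulrBr.
  by rewrite Phi_smul_comm // subrr.
- move=> a b _ Ha _ Hb; rewrite -[RHS](addr0 0) -{1}Ha -Hb /Phi -big_split /=.
  by apply: eq_bigr => t _; rewrite /sadd mulrDr.
- move=> c a _ Ha; rewrite -(mulr0 c) -Ha /Phi mulr_sumr.
  by apply: eq_bigr => t _; rewrite /sscale mulrCA.
- move=> a b E _ Ha; rewrite -Ha /Phi; apply: eq_bigr => t _; by rewrite E.
Qed.

Lemma Phi_lin m g (a b : ser k n) (c1 c2 : k) : 
  Phi m g (fun w => c1 * a w + c2 * b w) = c1 * Phi m g a + c2 * Phi m g b.
Proof.
rewrite /Phi !mulr_sumr -big_split /=; apply: eq_bigr => t _; ring.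
Qed.

Lemma Phi_ext m g (a b : ser k n) : (forall w, size w = m -> a w = b w) -> Phi m g a = Phi m g b.
Proof. by move=> E; apply: eq_bigr => t _; rewrite E // size_tuple. Qed.

End Trace.


Section Two.
Variable k : fieldType.
Implicit Types (p q s : ser k 2) (v w : seq 'I_2).

Lemma yx_neq : (y2 == x2) = false.
Proof. by apply/negbTE/eqP => /(congr1 val); rewrite /= inordK. Qed.
Lemma xy_neq : (x2 == y2) = false.
Proof. by rewrite eq_sym yx_neq. Qed.

Lemma I2_cases (e : 'I_2) : e = x2 \/ e = y2.
Proof.
case: e => [[|[|m]] H].
- by left; apply: val_inj.
- by right; apply: val_inj; rewrite /= inordK.
- by [].
Qed.

Lemma XY_l1 : l1supp (sadd (X2 k) (Y2 k)).
Proof. by move=> w Hw; rewrite /sadd /X2 /Y2 !letter_l1 ?addr0. Qed.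

Lemma XY1 e : sadd (X2 k) (Y2 k) [:: e] = 1.
Proof.
rewrite /sadd /X2 /Y2 !letter1.
by case: (I2_cases e) => ->; rewrite ?eqxx ?yx_neq ?xy_neq /= ?addr0 ?add0r.
Qed.

Lemma spow_l1_nil s j : l1supp s -> spow s j.+1 [::] = 0.
Proof. by move=> Hs; rewrite /spow iterS smul_l1_nil. Qed.

Lemma spow_l1_cons s j e v : l1supp s -> spow s j.+1 (e :: v) = s [:: e] * spow s j v.
Proof. by move=> Hs; rewrite /spow iterS smul_l1_cons. Qed.

Lemma spow0 s w : spow s 0 w = (w == [::])%:R.
Proof. by []. Qed.

Lemma spowX j w : spow (X2 k) j w = (w == nseq j x2)%:R.
Proof.
elim: j w => [|j IH] [|e v] //.
- by rewrite spow_l1_nil //; apply: letter_l1.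
- rewrite spow_l1_cons ?IH /X2 ?letter1; last by apply: letter_l1.
  by rewrite /= eqseq_cons; case: (e == _); case: (v == _); rewrite /= ?mulr1 ?mulr0.
Qed.

Lemma spowY j w : spow (Y2 k) j w = (w == nseq j y2)%:R.
Proof.
elim: j w => [|j IH] [|e v] //.
- by rewrite spow_l1_nil //; apply: letter_l1.
- rewrite spow_l1_cons ?IH /Y2 ?letter1; last by apply: letter_l1.
  by rewrite /= eqseq_cons; case: (e == _); case: (v == _); rewrite /= ?mulr1 ?mulr0.
Qed.

Lemma spowXY j w : spow (sadd (X2 k) (Y2 k)) j w = (size w == j)%:R.
Proof.
elim: j w => [|j IH] [|e v] //.
- by rewrite spow_l1_nil //; apply: XY_l1.
- by rewrite spow_l1_cons ?IH ?XY1 ?mul1r //; apply: XY_l1.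
Qed.

Lemma pser_at_single (f : nat -> k) p w : (forall j, j != size w -> spow p j w = 0) ->
  pser_at f p w = f (size w) * spow p (size w) w.
Proof.
move=> H; rewrite /pser_at big_ord_recr /= big1 ?add0r // => j _.
by rewrite H ?mulr0 // neq_ltn ltn_ord.
Qed.

Lemma fcob_at (f : nat -> k) w :
  fcob f w = f (size w) * ((w == nseq (size w) x2)%:R - 1 + (w == nseq (size w) y2)%:R).
Proof.
have -> : fcob f w = pser_at f (X2 k) w - pser_at f (sadd (X2 k) (Y2 k)) w + pser_at f (Y2 k) w by [].
rewrite !pser_at_single.
- by rewrite spowX spowY spowXY eqxx /=; ring.
- by move=> j Hj; rewrite spowY; case: eqP => // E; rewrite E size_nseq eqxx in Hj.
- by move=> j Hj; rewrite spowXY eq_sym (negbTE Hj).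
- by move=> j Hj; rewrite spowX; case: eqP => // E; rewrite E size_nseq eqxx in Hj.
Qed.

Definition g1 (w : seq 'I_2) : k := (count_mem y2 w == 1%N)%:R.

Lemma g1_rot i w : g1 (rot i w) = g1 w.
Proof. by rewrite /g1 /rot count_cat addnC -count_cat cat_take_drop. Qed.

Definition Nm (m : nat) : k := Phi m g1 (fun _ => 1).

Lemma Phi_fcob m (f : nat -> k) : (2 <= m)%N -> Phi m g1 (fcob f) = - f m * Nm m.
Proof.
move=> Hm; rewrite /Nm /Phi mulr_sumr; apply: eq_bigr => t _.
rewrite fcob_at size_tuple /g1.
case: eqP => Hc; last by rewrite !mul0r mulr0.
have -> : (tval t == nseq m x2) = false.
  by apply/negbTE/eqP => E; move: Hc; rewrite E count_nseq /= xy_neq.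
have -> : (tval t == nseq m y2) = false.
  apply/negbTE/eqP => E; move: Hc; rewrite E count_nseq /= eqxx mul1n => E1.
  by rewrite E1 in Hm.
by rewrite /=; ring.
Qed.

Lemma Nm_neq0 m : [pchar k] =i pred0 -> (1 <= m)%N -> Nm m != 0.
Proof.
move=> Hc Hm.
have Hs : size (nseq m.-1 x2 ++ [:: y2]) == m by rewrite size_cat size_nseq addn1 prednK.
set t0 := Tuple Hs.
rewrite /Nm /Phi.
have -> : \sum_(t : m.-tuple 'I_2) g1 t * 1 = (\sum_(t : m.-tuple 'I_2) (count_mem y2 t == 1%N) : nat)%:R.
  by rewrite natr_sum; apply: eq_bigr => t _; rewrite mulr1.
rewrite ((pcharf0P _).1 Hc) (bigD1 t0) //= count_cat count_nseq /= xy_neq /= eqxx.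
by [].
Qed.

End Two.


Section Sder.
Variable k : fieldType.
Implicit Types (p q s a b : ser k 2) (v w : seq 'I_2).

Lemma sbr_cons_rcons i p e v e' :
  sbr (@letter k 2 i) p (e :: rcons v e') = (e == i)%:R * p (rcons v e') - p (e :: v) * (e' == i)%:R.
Proof. by rewrite sbr_letter_cons -rcons_cons smul_letter_r. Qed.

Lemma nseqSr (c : 'I_2) j : nseq j.+1 c = rcons (nseq j c) c.
Proof. by elim: j => //= j ->. Qed.

Lemma sder_at a b w : sder2 a b -> sbr (X2 k) a w + sbr (Y2 k) b w = 0.
Proof. by case=> _ _ _ _ H; exact: H. Qed.

Lemma sder_a1y a b : sder2 a b -> forall j i, (1 <= i + j)%N -> a (nseq i x2 ++ y2 :: nseq j x2) = 0.
Proof.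
move=> Hs; have [_ Hb _ _ _] := Hs.
elim=> [|j IH] i Hij.
- have := sder_at (x2 :: rcons (nseq i x2) y2) Hs.
  rewrite /X2 /Y2 !sbr_cons_rcons !eqxx ?yx_neq ?xy_neq /=.
  rewrite ?mul1r ?mulr1 ?mul0r ?mulr0 ?subr0 ?sub0r ?add0r ?addr0.
  have Hi : i.+1 != 1%N by rewrite addn0 in Hij; rewrite eqSS -lt0n.
  have -> : b (x2 :: nseq i x2) = 0 := @is_lie_nseq k 2 b i.+1 x2 Hb Hi.
  by rewrite oppr0 addr0 cats1.
- have := sder_at (x2 :: rcons (nseq i x2 ++ y2 :: nseq j x2) x2) Hs.
  rewrite /X2 /Y2 !sbr_cons_rcons !eqxx ?yx_neq ?xy_neq /=.
  rewrite ?mul1r ?mulr1 ?mul0r ?mulr0 ?subr0 ?sub0r ?add0r ?addr0.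
  rewrite rcons_cat rcons_cons -nseqSr => /eqP; rewrite subr_eq0 => /eqP ->.
  by apply: (IH i.+1); rewrite addSn.
Qed.

Lemma sder_b_sym a b j : sder2 a b -> b (rcons (nseq j x2) y2) = b (y2 :: nseq j x2).
Proof.
move=> Hs; have := sder_at (y2 :: rcons (nseq j x2) y2) Hs.
rewrite /X2 /Y2 !sbr_cons_rcons !eqxx ?yx_neq /=.
rewrite ?mul1r ?mulr1 ?mul0r ?mulr0 ?subr0 ?sub0r ?add0r ?addr0.
by move/eqP; rewrite subr_eq0 => /eqP.
Qed.

Lemma char2 (x : k) : [pchar k] =i pred0 -> x = - x -> x = 0.
Proof.
move=> Hc E; have : (2%:R : k) * x = 0 by rewrite mulr2n mulrDl mul1r {1}E addNr.
move/eqP; rewrite mulf_eq0 ((pcharf0P _).1 Hc) /= => /eqP //.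
Qed.

Lemma kv2_b_even a b j : [pchar k] =i pred0 -> sder2 a b -> odd j ->
  b (rcons (nseq j x2) y2) = 0.
Proof.
move=> Hc Hs Hj; apply: char2 => //.
have [_ Hb _ _ _] := Hs.
have Er : rev (rcons (nseq j x2) y2) = y2 :: nseq j x2 by rewrite rev_rcons rev_nseq.
have := is_lie_rev (rcons (nseq j x2) y2) Hb.
by rewrite Er -(sder_b_sym _ Hs) size_rcons size_nseq -signr_odd /= Hj /= expr1 mulN1r; apply.
Qed.

Lemma div_cons a b e v :
  div2 a b (e :: v) = (e == x2)%:R * a (rcons v x2) + (e == y2)%:R * b (rcons v y2).
Proof. by rewrite /div2 /sadd /X2 /Y2 !smul_letter_l. Qed.

Lemma count0_nseq (w : seq 'I_2) : count_mem y2 w = 0%N -> w = nseq (size w) x2.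
Proof.
elim: w => //= e w IH; case: (I2_cases e) => ->; rewrite ?eqxx ?xy_neq //=.
by move=> H; rewrite -IH.
Qed.

Lemma count1_form (w : seq 'I_2) : count_mem y2 w = 1%N ->
  exists i j, w = nseq i x2 ++ y2 :: nseq j x2.
Proof.
elim: w => //= e w IH; case: (I2_cases e) => ->; rewrite ?eqxx ?xy_neq /= => H.
- by have [i [j ->]] := IH H; exists i.+1, j.
- by exists 0%N, (size w); rewrite -count0_nseq //; case: H.
Qed.

Lemma Phi_div_zero a b m : sder2 a b -> (2 <= m)%N ->
  b (rcons (nseq m.-1 x2) y2) = 0 -> Phi m (@g1 k) (div2 a b) = 0.
Proof.
move=> Hs Hm Hb; rewrite /Phi big1 // => t _; rewrite /g1.
case: eqP => H; last by rewrite mul0r.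
have [i [j Et]] := count1_form H.
have Hsz : (i + j).+1 = m by rewrite -(size_tuple t) Et size_cat /= size_nseq size_nseq addnS.
rewrite Et; case: i Et Hsz => [|i] Et Hsz /=.
- rewrite div_cons eqxx yx_neq /= mul0r add0r mul1r.
  by rewrite -Hsz /= add0n in Hb; rewrite mul1r Hb.
- rewrite div_cons eqxx xy_neq /= mul0r addr0 mul1r rcons_cat rcons_cons -nseqSr.
  by rewrite (sder_a1y Hs) ?mulr0 // addnS.
Qed.

Lemma is_f_Phi a b (f : nat -> k) m : is_f a b f -> (2 <= m)%N ->
  Phi m (@g1 k) (div2 a b) = - f m * Nm k m.
Proof.
move=> [_ Htr] Hm; rewrite -Phi_fcob //.
have := Phi_comm m (@g1_rot k) (Htr m).
rewrite (@Phi_ext _ _ m (@g1 k) _ (fun w => 1 * div2 a b w + (-1) * fcob f w)).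
  by rewrite Phi_lin mul1r mulN1r => /eqP; rewrite subr_eq0 => /eqP.
by move=> w Hw; rewrite homog_at // /ssub /sadd /sopp mul1r mulN1r.
Qed.

End Sder.


Section DerF.
Variable k : fieldType.
Variable n : nat.
Implicit Types (p q : ser k n) (v w u s r : seq 'I_n).

Lemma sum_single (N : nat) (F : nat -> k) i0 : (i0 <= N)%N ->
  (forall i, (i <= N)%N -> i != i0 -> F i = 0) -> \sum_(i < N.+1) F i = F i0.
Proof.
move=> Hi0 H; have Hi : (i0 < N.+1)%N by [].
rewrite (bigD1 (Ordinal Hi)) //= big1 ?addr0 // => i Hne; apply: H.
  by rewrite -ltnS.
by apply: contra Hne => /eqP E; apply/eqP/val_inj.
Qed.

Lemma word_r q r v : smul q (@word k n r) v =
  ((size r <= size v)%N && (drop (size v - size r) v == r))%:R * q (take (size v - size r) v).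
Proof.
rewrite /smul /word; case: (boolP (_ && _)) => [/andP [Hr /eqP Hd]|Hc].
  rewrite mul1r (@sum_single _ (fun i => q (take i v) * (drop i v == r)%:R) (size v - size r)).
  - by rewrite /= Hd eqxx mulr1.
  - by rewrite leq_subr.
  move=> i Hi Hne; case: eqP => [E|]; last by rewrite mulr0.
  by move: Hne; rewrite -E size_drop subKn // eqxx.
rewrite mul0r big1 // => i _; case: eqP => [E|]; last by rewrite mulr0.
move: Hc; rewrite -E size_drop leq_subr /= subKn; first by rewrite eqxx.
by rewrite -ltnS ltn_ord.
Qed.

Lemma word_l q s u : smul (@word k n s) q u =
  ((size s <= size u)%N && (take (size s) u == s))%:R * q (drop (size s) u).
Proof.
rewrite /smul /word; case: (boolP (_ && _)) => [/andP [Hs /eqP Hd]|Hc].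
  rewrite mul1r (@sum_single _ (fun i => (take i u == s)%:R * q (drop i u)) (size s)) //.
  - by rewrite /= Hd eqxx mul1r.
  move=> i Hi Hne; case: eqP => [E|]; last by rewrite mul0r.
  by move: Hne; rewrite -E size_take_min (minn_idPl _) // eqxx.
rewrite mul0r big1 // => i _; case: eqP => [E|]; last by rewrite mul0r.
have Hi : (i <= size u)%N by rewrite -ltnS ltn_ord.
move: Hc; rewrite -E size_take_min (minn_idPl _) // Hi /=.
by rewrite eqxx.
Qed.

Lemma M_eval (Q : ser k n) (t : seq 'I_n) j v :
  (j < size t)%N -> (size t <= size v)%N ->
  smul (smul (@word k n (take j t)) Q) (@word k n (drop j.+1 t)) v =
  (drop (size v - (size t - j.+1)) v == drop j.+1 t)%:R * (take j v == take j t)%:R *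
   Q (drop j (take (size v - (size t - j.+1)) v)).
Proof.
move=> Hj Hl; rewrite word_r word_l size_drop size_take Hj.
have -> : (size t - j.+1 <= size v)%N by lia.
rewrite /= size_take_min (minn_idPl _); last by lia.
have -> : (j <= size v - (size t - j.+1))%N by lia.
rewrite /= take_takel; last by lia.
by rewrite [(take j v == _)]eq_sym; ring.
Qed.

Lemma sum_tuple_eq (l : nat) (u : seq 'I_n) (F : seq 'I_n -> k) : size u = l ->
  \sum_(t : l.-tuple 'I_n) (tval t == u)%:R * F t = F u.
Proof.
move=> Hu; have Hu' : size u == l by rewrite Hu.
rewrite (bigD1 (Tuple Hu')) //= eqxx mul1r big1 ?addr0 // => t Ht.
case: eqP => E; last by rewrite mul0r.
have Et : t = Tuple Hu' by apply: val_inj.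
by rewrite Et eqxx in Ht.
Qed.

Lemma tuple_lemma (l : nat) (j : 'I_l) s r (P : seq 'I_n -> k) (G : 'I_n -> k) :
  size s = j -> size r = (l - j.+1)%N ->
  \sum_(t : l.-tuple 'I_n) P t * ((r == drop j.+1 t)%:R * (s == take j t)%:R * G (tnth t j))
  = \sum_(e : 'I_n) P (s ++ e :: r) * G e.
Proof.
move=> Hs Hr.
have E1 : forall e, P (s ++ e :: r) * G e =
   \sum_(t : l.-tuple 'I_n) (tval t == s ++ e :: r)%:R * (P t * G e).
  move=> e; rewrite (@sum_tuple_eq l _ (fun t => P t * G e)) //.
  by rewrite size_cat /= Hs Hr; move: (ltn_ord j); lia.
rewrite (eq_bigr _ (fun e _ => E1 e)) exchange_big /=; apply: eq_bigr => t _.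
have Et : tval t = take j t ++ tnth t j :: drop j.+1 t.
  by rewrite (tnth_nth (tnth t j)) -drop_nth ?size_tuple // cat_take_drop.
have Hsz : size (take j t) = size s by rewrite size_take size_tuple ltn_ord.
under eq_bigr => e _ do rewrite [in tval t == _]Et eqseq_cat // eqseq_cons.
rewrite (bigD1 (tnth t j)) //= big1 ?addr0; last first.
  by move=> e He; rewrite [tnth t j == e]eq_sym (negbTE He) /= andbF mul0r.
rewrite [tnth t j == tnth t j]eqxx [take _ _ == s]eq_sym [drop _ _ == r]eq_sym.
by case: (s == _); case: (r == _); rewrite /= ?mul1r ?mul0r ?mulr0 ?mulr1.
Qed.

Lemma der_formula (c : 'I_n -> ser k n) p v :
  der c p v = \sum_(l < (size v).+1) \sum_(j < l) \sum_(e : 'I_n)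
     p (take j v ++ e :: drop (size v - (l - j.+1)) v) *
     sbr (@letter k n e) (c e) (drop j (take (size v - (l - j.+1)) v)).
Proof.
rewrite /der; apply: eq_bigr => l _.
under eq_bigr => t _ do rewrite mulr_sumr.
rewrite exchange_big /=; apply: eq_bigr => j _.
have Hl : (l <= size v)%N by rewrite -ltnS ltn_ord.
under eq_bigr => t _ do rewrite M_eval ?size_tuple //.
apply: (@tuple_lemma l j (take j v) (drop (size v - (l - j.+1)) v) (fun t => p t)
   (fun e => sbr (@letter k n e) (c e) (drop j (take (size v - (l - j.+1)) v)))).
- by rewrite size_take_min (minn_idPl _) //; apply: ltnW; apply: leq_trans Hl.
- rewrite size_drop; move: (ltn_ord j); lia.
Qed.

End DerF.


Section Eval.
Variable k : fieldType.
Implicit Types (p q a b : ser k 2) (v w u s : seq 'I_2).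

Lemma sum_I2 (F : 'I_2 -> k) : \sum_(e : 'I_2) F e = F x2 + F y2.
Proof.
rewrite big_ord_recl big_ord_recl big_ord0 addr0; congr (F _ + F _).
by apply: val_inj; rewrite /= inordK.
Qed.

Lemma sbr_nseq i q d (c : 'I_2) : sbr (@letter k 2 i) q (nseq d.+1 c) = 0.
Proof.
rewrite sbr_letter_cons.
have -> : c :: nseq d c = rcons (nseq d c) c by rewrite -nseqSr.
by rewrite smul_letter_r mulrC subrr.
Qed.

Lemma take_nseq_cat j d (c : 'I_2) s : (j <= d)%N -> take j (nseq d c ++ s) = nseq j c.
Proof.
move=> H; rewrite take_cat size_nseq; case: ltnP => H2; first by rewrite take_nseq // ltnW.
have -> : j = d by apply/eqP; rewrite eqn_leq H H2.
by rewrite subnn take0 cats0.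
Qed.

Lemma drop_nseq_cat j d (c : 'I_2) s : (j <= d)%N -> drop j (nseq d c ++ s) = nseq (d - j) c ++ s.
Proof.
move=> H; rewrite drop_cat size_nseq; case: ltnP => H2; first by rewrite drop_nseq.
have -> : j = d by apply/eqP; rewrite eqn_leq H H2.
by rewrite subnn drop0.
Qed.

Lemma gen2x a b : gen2 a b x2 = a. Proof. by rewrite /gen2 eqxx. Qed.
Lemma gen2y a b : gen2 a b y2 = b. Proof. by rewrite /gen2 yx_neq. Qed.

Lemma nseq_cat1 j (c e : 'I_2) : nseq j c ++ [:: e] = rcons (nseq j c) e.
Proof. by rewrite cats1. Qed.

Ltac simpl_r := rewrite ?mul1r ?mulr1 ?mul0r ?mulr0 ?subr0 ?sub0r ?add0r ?addr0 ?oppr0.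

Lemma Hval n0 a1 b1 b2 K j :
  sder2 a1 b1 -> is_lie b2 -> b2 [:: y2] = 0 ->
  (j < K)%N -> (K <= n0.+4)%N ->
  \sum_(e : 'I_2) sbr (Y2 k) b2 (take j (nseq n0.+2 x2 ++ [:: y2; y2]) ++ e ::
                                  drop K (nseq n0.+2 x2 ++ [:: y2; y2])) *
     sbr (@letter k 2 e) (gen2 a1 b1 e) (drop j (take K (nseq n0.+2 x2 ++ [:: y2; y2])))
  = (K == n0.+4)%:R * (j == 1%N)%:R * (b2 [:: x2] * b1 (rcons (nseq n0.+1 x2) y2)) +
    (K == n0.+3)%:R * (j == n0.+1)%:R * (b2 (rcons (nseq n0.+1 x2) y2) * b1 [:: x2]).
Proof.
move=> Hs1 Hb2 Hb2y HjK HK.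
have [_ Hb1 _ Hb1y _] := Hs1.
rewrite sum_I2 gen2x gen2y.
case: (leqP K n0.+2) => HK2.
  (* middle segment is all x *)
  rewrite (@take_nseq_cat K n0.+2) // drop_nseq.
  have -> : (K - j)%N = (K - j).-1.+1 by rewrite prednK // subn_gt0.
  rewrite !sbr_nseq; simpl_r.
  have -> : (K == n0.+4) = false by apply/negbTE; rewrite neq_ltn; apply/orP; left; lia.
  have -> : (K == n0.+3) = false by apply/negbTE; rewrite neq_ltn; apply/orP; left; lia.
  by simpl_r.
have [EK|EK] : K = n0.+3 \/ K = n0.+4 by lia.
-
  subst K; rewrite eqxx.
  have -> : (n0.+3 == n0.+4) = false by apply/negbTE; lia.
  have -> : take n0.+3 (nseq n0.+2 x2 ++ [:: y2; y2]) = rcons (nseq n0.+2 x2) y2.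
    by rewrite take_cat size_nseq ltnNge leqnSn /= subSn // subnn /= cats1.
  have -> : drop n0.+3 (nseq n0.+2 x2 ++ [:: y2; y2]) = [:: y2].
    by rewrite drop_cat size_nseq ltnNge leqnSn /= subSn // subnn.
  have Hj : (j <= n0.+2)%N by lia.
  rewrite take_nseq_cat // -cats1 drop_nseq_cat //.
  case: (leqP j n0.+1) => Hj1; last first.
    have -> : j = n0.+2 by lia.
    by rewrite subnn /= -[[:: y2]]/(nseq 1 y2) !sbr_nseq gtn_eqF //; simpl_r.
  have -> : (n0.+2 - j)%N = (n0.+1 - j).+1 by rewrite subSn.
  rewrite /= nseq_cat1 (sbr_cons_rcons x2) (sbr_cons_rcons y2) !eqxx yx_neq xy_neq /=; simpl_r.
  have Ex : sbr (Y2 k) b2 (nseq j x2 ++ [:: x2; y2]) = - b2 (nseq j.+1 x2).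
    have -> : nseq j x2 ++ [:: x2; y2] = x2 :: rcons (nseq j x2) y2.
      by elim: (j) => //= j' ->.
    by rewrite /Y2 sbr_cons_rcons eqxx xy_neq /=; simpl_r.
  rewrite Ex.
  have -> : - b2 (nseq j.+1 x2) * a1 (rcons (nseq (n0.+1 - j) x2) y2) = 0.
    case: j {Hj Hj1 HjK Ex} => [|j'].
      have H0 : a1 (rcons (nseq n0.+1 x2) y2) = 0.
        by rewrite -cats1; exact: (@sder_a1y k a1 b1 Hs1 0 n0.+1 isT).
      by rewrite subn0 H0 mulr0.
    by rewrite (@is_lie_nseq k 2 b2 j'.+2 x2 Hb2) ?oppr0 ?mul0r.
  rewrite add0r.
  case: (eqVneq j n0.+1) => [Ej|Nj].
  + rewrite Ej subnn /=.
    have -> : x2 :: nseq n0 x2 ++ [:: y2; y2] = x2 :: rcons (rcons (nseq n0 x2) y2) y2.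
      by rewrite -!cats1 -catA.
    rewrite /Y2 sbr_cons_rcons eqxx xy_neq /=; simpl_r; ring.
  + simpl_r.
    have Hd : (0 < n0.+1 - j)%N by rewrite subn_gt0 ltn_neqAle Nj Hj1.
    have -> : b1 (x2 :: nseq (n0.+1 - j) x2) = 0.
      by rewrite (@is_lie_nseq k 2 b1 (n0.+1 - j).+1 x2 Hb1) // eqSS -lt0n.
    by rewrite oppr0 mulr0.
-
  subst K; rewrite eqxx.
  have -> : (n0.+4 == n0.+3) = false by apply/negbTE; lia.
  rewrite (@take_oversize _ n0.+4) ?size_cat ?size_nseq ?addn2 //.
  rewrite (@drop_oversize _ n0.+4) ?size_cat ?size_nseq ?addn2 //.
  simpl_r.
  case: (leqP j n0.+2) => Hj; last first.
    have -> : j = n0.+3 by lia.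
    have -> : drop n0.+3 (nseq n0.+2 x2 ++ [:: y2; y2]) = nseq 1 y2.
      by rewrite drop_cat size_nseq ltnNge leqnSn /= subSn // subnn.
    by rewrite !sbr_nseq; simpl_r.
  rewrite (@take_nseq_cat j n0.+2) // (@drop_nseq_cat j n0.+2) //.
  rewrite nseq_cat1 -nseqSr sbr_nseq; simpl_r.
  case: j Hj HjK => [|j] Hj HjK.
    by rewrite nseq_cat1 /= -[[:: y2]]/(nseq 1 y2) sbr_nseq; simpl_r.
  have -> : nseq j.+1 x2 ++ [:: y2] = x2 :: rcons (nseq j x2) y2 by rewrite /= cats1.
  rewrite /Y2 sbr_cons_rcons eqxx xy_neq /=; simpl_r.
  case: (leqP j n0) => Hj2; last first.
    have -> : j = n0.+1 by lia.
    rewrite subnn /=.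
    have -> : [:: y2; y2] = y2 :: rcons [::] y2 by [].
    by rewrite sbr_cons_rcons eqxx /= mul1r mulr1 subrr mulr0 mul0r.
  have -> : (n0.+2 - j.+1)%N = (n0 - j).+1 by lia.
  have -> : nseq (n0 - j).+1 x2 ++ [:: y2; y2] = x2 :: rcons (rcons (nseq (n0 - j) x2) y2) y2.
    by rewrite /= -!cats1 -catA.
  rewrite sbr_cons_rcons eqxx xy_neq /=; simpl_r.
  case: j Hj HjK Hj2 => [|j] Hj HjK Hj2.
    by rewrite subn0 /=; ring.
  by rewrite (@is_lie_nseq k 2 b2 j.+2 x2 Hb2) // oppr0 !mul0r.
Qed.

End Eval.


Section Final.
Variable k : fieldType.
Implicit Types (p q a b : ser k 2) (v w u s : seq 'I_2).

Lemma sum_ind (L c : nat) (X : k) : \sum_(j < L) ((j : nat) == c)%:R * X = (c < L)%:R * X.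
Proof.
case: (ltnP c L) => H.
  rewrite (bigD1 (Ordinal H)) //= eqxx big1 ?addr0 // => j Hj.
  suff -> : (j == c :> nat) = false by rewrite mul0r.
  by apply/negbTE; apply: contra Hj => /eqP E; apply/eqP/val_inj.
rewrite mul0r big1 // => j _.
suff -> : (j == c :> nat) = false by rewrite mul0r.
by apply/negbTE; move: (ltn_ord j) => Hj; lia.
Qed.

Lemma der_v0 n0 a1 b1 b2 :
  sder2 a1 b1 -> is_lie b2 -> b2 [:: y2] = 0 ->
  der (gen2 a1 b1) (sbr (Y2 k) b2) (nseq n0.+2 x2 ++ [:: y2; y2]) =
  b2 [:: x2] * b1 (rcons (nseq n0.+1 x2) y2) + b2 (rcons (nseq n0.+1 x2) y2) * b1 [:: x2].
Proof.
move=> Hs1 Hb2 Hb2y.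
rewrite der_formula size_cat size_nseq /= addn2.
set T1 := b2 [:: x2] * _; set T2 := b2 _ * b1 [:: x2].
transitivity (\sum_(l < n0.+4.+1) \sum_(j < l)
   (((j : nat) == 1%N)%:R * (((l : nat) == 2%N)%:R * T1) + ((j : nat) == n0.+1)%:R * (((l : nat) == n0.+3)%:R * T2))).
  apply: eq_bigr => l _; apply: eq_bigr => j _.
  have Hl : (l <= n0.+4)%N by rewrite -ltnS ltn_ord.
  have Hj : (j < l)%N by apply: ltn_ord.
  rewrite Hval //; last 2 first.
  - lia.
  - lia.
  have E1 : ((n0.+4 - (l - j.+1))%N == n0.+4)%:R * ((j : nat) == 1%N)%:R = ((j : nat) == 1%N)%:R * ((l : nat) == 2%N)%:R :> k.
    case: (eqVneq (j : nat) 1%N) => [Ej|Nj]; last by rewrite !mulr0 mul0r.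
    rewrite Ej /= mulr1 mul1r; by do 2 case: eqP => ? //; lia.
  have E2 : ((n0.+4 - (l - j.+1))%N == n0.+3)%:R * ((j : nat) == n0.+1)%:R = ((j : nat) == n0.+1)%:R * ((l : nat) == n0.+3)%:R :> k.
    case: (eqVneq (j : nat) n0.+1) => [Ej|Nj]; last by rewrite !mulr0 mul0r.
    rewrite Ej /= mulr1 mul1r; by do 2 case: eqP => ? //; lia.
  by rewrite E1 E2 !mulrA.
under eq_bigr => l _ do rewrite big_split /= !sum_ind.
rewrite big_split /=.
have F1 : forall (c d : nat) (X : k), (c < d)%N -> (d <= n0.+4)%N ->
    \sum_(l < n0.+4.+1) (c < l)%:R * (((l : nat) == d)%:R * X) = X.
  move=> c d X Hcd Hd.
  transitivity (\sum_(l < n0.+4.+1) ((l : nat) == d)%:R * X).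
    apply: eq_bigr => l _; case: (eqVneq (l : nat) d) => [->|]; first by rewrite Hcd mul1r.
    by rewrite !mul0r mulr0.
  by rewrite sum_ind ltnS Hd mul1r.
by rewrite !F1.
Qed.

End Final.

Unset Implicit Arguments.
Set Strict Implicit.


Lemma bracket_b (k : fieldType) (m : nat) (a1 b1 a2 b2 a b : ser k 2) :
  (3 <= m)%N -> kv2 a1 b1 -> kv2 a2 b2 -> kv2 a b ->
        (forall w, sbr (Y2 k) b w
                   = (der (gen2 a1 b1) (sbr (Y2 k) b2) w
                      - der (gen2 a2 b2) (sbr (Y2 k) b1) w)) ->
  b (rcons (nseq m.-1 x2) y2) = 0.
Proof.
case: m => [|[|[|n0]]] // _ [Hs1 _] [Hs2 _] _ Hb.
have [_ Hb1 _ Hb1y _] := Hs1; have [_ Hb2 _ Hb2y _] := Hs2.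
have := Hb (nseq n0.+2 x2 ++ [:: y2; y2]).
rewrite (der_v0 n0 Hs1 Hb2 Hb2y) (der_v0 n0 Hs2 Hb1 Hb1y).
have -> : nseq n0.+2 x2 ++ [:: y2; y2] = x2 :: rcons (nseq n0.+1 x2 ++ [:: y2]) y2.
  by rewrite /= -cats1 -catA.
rewrite /Y2 sbr_cons_rcons xy_neq eqxx /= mul0r mulr1 sub0r.
have -> : b2 [:: x2] * b1 (rcons (nseq n0.+1 x2) y2) + b2 (rcons (nseq n0.+1 x2) y2) * b1 [:: x2]
   - (b1 [:: x2] * b2 (rcons (nseq n0.+1 x2) y2) + b1 (rcons (nseq n0.+1 x2) y2) * b2 [:: x2]) = 0.
  by ring.
by move/eqP; rewrite oppr_eq0 cats1 => /eqP.
Qed.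

Lemma div2_lin (k : fieldType) (a1 b1 a2 b2 a b : ser k 2) (c1 c2 : k) :
  (forall w, a w = c1 * a1 w + c2 * a2 w) ->
  (forall w, b w = c1 * b1 w + c2 * b2 w) ->
  forall w, div2 a b w = c1 * div2 a1 b1 w + c2 * div2 a2 b2 w.
Proof.
move=> Ha Hb [|e v].
  rewrite /div2 /sadd /X2 /Y2 !smul_l1_nil ?mulr0 ?addr0 //; try exact: (@letter_l1 k 2); ring.
by rewrite !div_cons Ha Hb; ring.
Qed.

Lemma cancelN (k : fieldType) (N x y : k) : N != 0 -> - x * N = - y * N -> x = y.
Proof. by move=> HN /(mulIf HN) /oppr_inj. Qed.

Theorem proposition4p4 (k : fieldType) (Hchar : [pchar k] =i pred0) :
  (* f is odd *)
  (forall (a b : ser k 2) (f : nat -> k),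
      kv2 a b -> is_f a b f -> forall m : nat, ~~ odd m -> f m = 0)
  /\
  (* for odd m >= 3, u |-> f_m is a character of kv2 *)
  (forall m : nat, odd m -> (3 <= m)%N ->
     (* linear *)
     (forall (a1 b1 a2 b2 a b : ser k 2) (f1 f2 f : nat -> k) (c1 c2 : k),
        kv2 a1 b1 -> kv2 a2 b2 -> is_f a1 b1 f1 -> is_f a2 b2 f2 ->
        (forall w, a w = c1 * a1 w + c2 * a2 w) ->
        (forall w, b w = c1 * b1 w + c2 * b2 w) ->
        is_f a b f -> f m = c1 * f1 m + c2 * f2 m)
     /\
     (* vanishes on brackets [u1,u2] = u1 u2 - u2 u1 *)
     (forall (a1 b1 a2 b2 a b : ser k 2) (f : nat -> k),
        kv2 a1 b1 -> kv2 a2 b2 -> kv2 a b ->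
        (forall w, sbr (X2 k) a w
                   = (der (gen2 a1 b1) (sbr (X2 k) a2) w
                      - der (gen2 a2 b2) (sbr (X2 k) a1) w)) ->
        (forall w, sbr (Y2 k) b w
                   = (der (gen2 a1 b1) (sbr (Y2 k) b2) w
                      - der (gen2 a2 b2) (sbr (Y2 k) b1) w)) ->
        is_f a b f -> f m = 0)).
Proof.
split.
- move=> a b f [Hs _] Hf [|[|m]] //= Hm; first by case: Hf => [[]].
  have Hm2 : (2 <= m.+2)%N by [].
  have := is_f_Phi Hf Hm2.
  rewrite Phi_div_zero //; last by apply: (kv2_b_even Hchar Hs); rewrite /= negbK in Hm.
  move=> /esym /eqP; rewrite mulf_eq0 oppr_eq0 (negbTE (Nm_neq0 Hchar _)) // orbF.
  by move/eqP.
- move=> m Hodd Hm3; have Hm2 : (2 <= m)%N by apply: ltnW.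
  split.
  + move=> a1 b1 a2 b2 a b f1 f2 f c1 c2 _ _ Hf1 Hf2 Ha Hb Hf.
    have := is_f_Phi Hf Hm2.
    rewrite (@Phi_ext k 2 m (@g1 k) _ (fun w => c1 * div2 a1 b1 w + c2 * div2 a2 b2 w)); last first.
      by move=> w _; apply: div2_lin.
    rewrite Phi_lin (is_f_Phi Hf1 Hm2) (is_f_Phi Hf2 Hm2).
    move=> E; apply: (@cancelN k (Nm k m)); first exact: (Nm_neq0 Hchar (ltnW Hm2)).
    by rewrite -E; ring.
  + move=> a1 b1 a2 b2 a b f H1 H2 H _ Hb Hf.
    have := is_f_Phi Hf Hm2.
    rewrite Phi_div_zero //.
    * move=> /esym /eqP; rewrite mulf_eq0 oppr_eq0 (negbTE (Nm_neq0 Hchar _)) ?orbF //.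
        by move/eqP.
      by apply: ltnW.
    * by case: H.
    * exact: (@bracket_b k m a1 b1 a2 b2 a b Hm3 H1 H2 H Hb).
Qed.
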